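(* Consider the redundancy system with scaled Bernoulli service requirements and its auxiliary system, both as described in the context, driven by the same arrivals and the same replica service requirement draws, and started in the same initial workload state $\tilde{\boldsymbol{\omega}}$ with $\tilde\omega_{(1)}=\dots=\tilde\omega_{(d)}$, i.e. $\tilde{\boldsymbol{\omega}}(0)=\boldsymbol{\omega}(0)=\tilde{\boldsymbol{\omega}}$. Then for all $t\ge 0$ and all $i=1,\dots,N$, $$\tilde\omega_{(1)}(t)-\tilde\omega_{(i)}(t)\ \ge\ \omega_{(1)}(t)-\omega_{(i)}(t).$$
   Context: Original system: $N$ parallel servers; jobs arrive according to a Poisson process of rate $\lambda$. Each arriving job is replicated into $d$ replicas ($1\le d\le N$), sent to $d$ distinct servers chosen uniformly at random without replacement. Replicas are served FCFS at each server; a job completes as soon as its first replica completes, and the other replicas are then instantaneously abandoned. Replica service requirements are i.i.d. copies of $B$, where $B=XK$ with probability $1-p$ and $B=0$ with probability $p$; here $K\ge1$ is a fixed real number, $X$ is a strictly positive random variable with $\mathbb{E}[X]=1$, and $p=1-1/K$ (so $\mathbb{E}[B]=1$). The workload $\omega_i$ of server $i$ is the real amount of work it must do to become idle absent further arrivals; between arrivals positive workloads decrease at unit rate. If a job arrives with sampled servers $s_1,\dots,s_d$ and replica requirements $b_1,\dots,b_d$, the new workload at $s_l$ is $\max\{\min_j(\omega_{s_j}+b_j),\omega_{s_l}\}$, other servers unchanged. $\omega_{(1)}\ge\dots\ge\omega_{(N)}$ denote the ordered workloads. The system is in synchronicity when all $N$ workloads are equal. A job is of type $A$ if none of its $d$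 replicas has requirement $0$ (its requirements are then $X_1K,\dots,X_dK$ with $X_j$ i.i.d. copies of $X$), of type $B$ if between $1$ and $d-1$ of its replicas have requirement $0$, and of type $C$ if all replicas have requirement $0$. A type-$B_1$ job is one whose $d-1$ replicas, at least one of which has requirement $0$, are allocated to the $d-1$ servers with the largest workloads (first $d-1$ ordered servers), and whose remaining replica, with requirement $X_dK$, is allocated to the server with the smallest workload (the $N$-th ordered server). Auxiliary system (workloads $\tilde{\boldsymbol{\omega}}(t)$): identical to the original system, driven by the same arrivals and service requirement draws, except that (i) workloads decrease over time only while the auxiliary system is in synchronicity (otherwise they stay constant between arrivals), (ii) every type-$A$ job is allocated to the $d$ servers with the largest workloads (first $d$ ordered servers) instead of to $d$ random servers, and (iii) among type-$B$ jobs only type-$B_1$ jobs are taken into account; the other type-$B$ jobs are omitted. *)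

(* Defs.v *)
From HB Require Import structures.
From mathcomp Require Import all_boot all_order all_algebra all_fingroup.
From mathcomp Require Import reals.
Set Implicit Arguments. Unset Strict Implicit. Unset Printing Implicit Defensive.
Import Order.TTheory GRing.Theory Num.Theory.
Local Open Scope ring_scope.

Section Model.
Variable R : realType.
Variables N d : nat.

(* minimum of a finite family (0 for the empty family, never used) *)
Definition fmin n (f : 'I_n -> R) : R :=
  match n return ('I_n -> R) -> R with
  | 0 => fun _ => 0
  | n'.+1 => fun f => \big[Order.min/f ord0]_(j < n'.+1) f j
  end f.

Definition drain (w : 'I_N -> R) (s : R) : 'I_N -> R :=
  fun i => Num.max (w i - s) 0.

Definition synchronized (w : 'I_N -> R) : bool :=
  [forall i, forall j, w i == w j].

Definition aux_drain (w : 'I_N -> R) (s : R) : 'I_N -> R :=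
  if synchronized w then drain w s else w.

Definition arrive (w : 'I_N -> R) (srv : 'I_d -> 'I_N) (b : 'I_d -> R)
  : 'I_N -> R :=
  fun i => if [exists j, srv j == i]
           then Num.max (fmin (fun j => w (srv j) + b j)) (w i)
           else w i.

Definition typeA (b : 'I_d -> R) : bool := [forall j, b j != 0].
Definition typeC (b : 'I_d -> R) : bool := [forall j, b j == 0].
Definition typeB (b : 'I_d -> R) : bool := ~~ typeA b && ~~ typeC b.

(* replica requirements: 0 if the Bernoulli indicator z is set, else X*K *)
Definition req (K : R) (X : nat -> 'I_d -> R) (z : nat -> 'I_d -> bool)
  (n : nat) (j : 'I_d) : R := if z n j then 0 else X n j * K.

(* srt w is an ordering permutation: position k (0-based) |-> server with
   the (k+1)-th largest workload (omega_(k+1) = w (srt w k)) *)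
Variable srt : ('I_N -> R) -> {perm 'I_N}.

Definition ostat (w : 'I_N -> R) (k : 'I_N) : R := w (srt w k).

Definition rank (w : 'I_N -> R) (i : 'I_N) : nat := ((srt w)^-1)%g i.

Definition typeB1 (w : 'I_N -> R) (srv : 'I_d -> 'I_N) (b : 'I_d -> R) : bool :=
  typeB b &&
  [exists l, [&& b l != 0, rank w (srv l) == N.-1 &
     [forall j, (j != l) ==> (rank w (srv j) < d.-1)%N]]].

(* auxiliary arrival; w = original pre-arrival workloads, v = auxiliary ones *)
Definition aux_arrive (hdN : (d <= N)%N) (w v : 'I_N -> R)
  (srv : 'I_d -> 'I_N) (b : 'I_d -> R) : 'I_N -> R :=
  if typeA b then arrive v (fun j => srt v (widen_ord hdN j)) b
  else if typeC b then arrive v srv b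
  else if typeB1 w srv b then arrive v (fun j => srt v (((srt w)^-1)%g (srv j))) b
  else v.

(* time of the n-th arrival (1-based), with prev_arr a 0 = 0 *)
Definition prev_arr (a : nat -> R) (n : nat) : R :=
  if n is n'.+1 then a n' else 0.

(* (original, auxiliary) workloads just after the n-th arrival *)
Fixpoint states (hdN : (d <= N)%N) (a : nat -> R) (srv : nat -> 'I_d -> 'I_N)
  (b : nat -> 'I_d -> R) (w0 : 'I_N -> R) (n : nat)
  : ('I_N -> R) * ('I_N -> R) :=
  match n with
  | 0 => (w0, w0)
  | n'.+1 =>
      let: (w, v) := states hdN a srv b w0 n' in
      let e := a n' - prev_arr a n' in
      let w' := drain w e in
      (arrive w' (srv n') (b n'),
       aux_arrive hdN w' (aux_drain v e) (srv n') (b n'))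
  end.

(* workloads at time t, for prev_arr a n <= t < a n *)
Definition orig_at hdN a srv b w0 n (t : R) : 'I_N -> R :=
  drain (states hdN a srv b w0 n).1 (t - prev_arr a n).
Definition aux_at hdN a srv b w0 n (t : R) : 'I_N -> R :=
  aux_drain (states hdN a srv b w0 n).2 (t - prev_arr a n).

End Model.

Definition pos0 (N d : nat) (hd : (0 < d)%N) (hdN : (d <= N)%N) : 'I_N :=
  Ordinal (leq_trans hd hdN).

(* Main.v *)
Require Import Defs.
From HB Require Import structures.
From mathcomp Require Import all_boot all_order all_algebra all_fingroup.
From mathcomp Require Import reals.
From mathcomp Require Import ring lra zify.
Import Order.TTheory GRing.Theory Num.Theory.
Local Open Scope ring_scope.

Lemma cardlt N k : (k <= N)%N -> #|[set j : 'I_N | (j < k)%N]| = k.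
Proof.
move=> hk.
rewrite cardsE cardE -(size_map val) /enum_mem -enumT /=.
rewrite -(@filter_map _ _ val (fun x : nat => x < k)%N) val_enum_ord.
by rewrite (filter_iota_ltn 0 hk) size_iota.
Qed.

Section Fmin.
Variable R : realType.

Lemma fmin_le n (f : 'I_n -> R) j : fmin f <= f j.
Proof.
case: n f j => [|n] f j; first by case: j.
by rewrite /= (bigD1 j) //= ge_min lexx.
Qed.

Lemma fmin_ex n (f : 'I_n -> R) : (0 < n)%N -> exists j, fmin f = f j.
Proof.
case: n f => [|n] f //= _.
apply: (big_ind (fun x => exists j, x = f j)); first by exists ord0.
- move=> x y [i ->] [j ->]; rewrite minEle; case: ifP => _; [by exists i|by exists j].
- by move=> i _; exists i.
Qed.

Lemma fmin_ge n (f : 'I_n -> R) c : (0 < n)%N -> (forall j, c <= f j) -> c <= fmin f.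
Proof. by move=> hn hc; case: (fmin_ex _ f hn) => j ->. Qed.

Lemma fmin_char n (f : 'I_n -> R) c : (forall j, c <= f j) -> (exists j, f j = c) -> fmin f = c.
Proof.
move=> hc [j hj]; apply/le_anti; rewrite -{1}hj fmin_le /=.
by apply: fmin_ge => //; case: n f j hc hj => [|n] f [].
Qed.
End Fmin.
Arguments fmin_le {R n} f j.
Arguments fmin_ex {R n} f.
Arguments fmin_ge {R n f} c.
Arguments fmin_char {R n f} c.

Section Main.
Variable R : realType.
Variables N d : nat.
Hypothesis hd : (0 < d)%N.
Hypothesis hdN : (d <= N)%N.
Variable srt : ('I_N -> R) -> {perm 'I_N}.
Hypothesis hsrt : forall (w : 'I_N -> R) (i j : 'I_N), (i <= j)%N -> w (srt w j) <= w (srt w i).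

Implicit Types (w v u : 'I_N -> R) (s : 'I_d -> 'I_N) (b : 'I_d -> R).
Let p0 := pos0 hd hdN.
Definition M (u : 'I_N -> R) := ostat srt u p0.
Definition cnt (u : 'I_N -> R) (x : R) := #|[set i | x <= u i]|.

Lemma M_ge u i : u i <= M u.
Proof. rewrite /M /ostat -{1}(permKV (srt u) i); exact: hsrt. Qed.

Lemma M_le u c : (forall i, u i <= c) -> M u <= c.
Proof. by move=> h; apply: h. Qed.

Lemma M_eq u c : (forall i, u i <= c) -> (exists i, u i = c) -> M u = c.
Proof. move=> h [i hi]; apply/le_anti; rewrite M_le //= -hi; exact: M_ge. Qed.

Lemma M_ext u u' : u =1 u' -> M u = M u'.
Proof.
move=> h; apply: M_eq => [i|]; first by rewrite (h i) M_ge.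
by exists (srt u' p0); rewrite (h _).
Qed.

Lemma cnt_sub u u' x x' : (forall i, x <= u i -> x' <= u' i) -> (cnt u x <= cnt u' x')%N.
Proof. by move=> h; apply: subset_leq_card; apply/subsetP => i; rewrite !inE; apply: h. Qed.

Lemma cnt_ext u u' x : u =1 u' -> cnt u x = cnt u' x.
Proof. by move=> h; apply/eqP; rewrite eqn_leq !cnt_sub // => i; rewrite h. Qed.

Lemma cnt_max u x : (cnt u x <= N)%N.
Proof. by have := max_card [set i | x <= u i]; rewrite card_ord. Qed.

Lemma cnt_all u x : (forall i, x <= u i) -> cnt u x = N.
Proof.
move=> h; rewrite /cnt.
have -> : [set i | x <= u i] = setT by apply/setP => i; rewrite !inE h.
by rewrite cardsT card_ord.
Qed.

Lemma cnt_N u x : (N <= cnt u x)%N -> forall i, x <= u i.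
Proof.
move=> hN i; apply/negPn/negP => hi.
have : (cnt u x <= #|[set~ i]|)%N.
  by apply: subset_leq_card; apply/subsetP => j; rewrite !inE; apply: contraTneq => ->.
rewrite cardsC1 card_ord => h.
have : (N <= N.-1)%N by apply: leq_trans h.
by have := ltn_ord i; lia.
Qed.

Lemma cnt_neg u y : y < 0 -> cnt u (M u - y) = 0%N.
Proof.
move=> hy; apply/eqP; rewrite cards_eq0; apply/eqP/setP => i; rewrite !inE.
apply/negbTE; rewrite -ltNge; have := M_ge u i; lra.
Qed.

Lemma cnt_upd u u' q x : (forall i, i != q -> u' i = u i) ->
  (cnt u' x + nat_of_bool (x <= u q)%R = cnt u x + nat_of_bool (x <= u' q)%R)%N.
Proof.
move=> h; rewrite /cnt (cardD1 q) (cardD1 q [set i | x <= u i]) !inE.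
have -> : #|[predD1 [set i | x <= u' i] & q]| = #|[predD1 [set i | x <= u i] & q]|.
  by apply: eq_card => i; rewrite !inE; case: eqP => //= /eqP /h ->.
lia.
Qed.

Lemma ostat_cnt u (k : 'I_N) x : (x <= ostat srt u k) = (k < cnt u x)%N.
Proof.
apply/idP/idP => [hx|].
  have <- : #|[set srt u j | j in [set j : 'I_N | (j < k.+1)%N]]| = k.+1.
    by rewrite card_imset ?cardlt //; exact: perm_inj.
  apply: subset_leq_card; apply/subsetP => y /imsetP [j]; rewrite !inE => hj ->.
  by apply: le_trans hx _; apply: hsrt.
apply: contraTT; rewrite -ltNge => hx; rewrite -leqNgt.
have <- : #|[set srt u j | j in [set j : 'I_N | (j < k)%N]]| = k.
  by rewrite card_imset ?cardlt //; [exact: ltnW | exact: perm_inj].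
apply: subset_leq_card; apply/subsetP => i; rewrite !inE => hi.
rewrite -(permKV (srt u) i); apply: imset_f; rewrite inE ltnNge; apply/negP => hk.
have := hsrt u _ _ hk; rewrite permKV /ostat in hx *; lra.
Qed.


Definition P w v := forall y, (cnt v (M v - y) <= cnt w (M w - y))%N.
Definition Top u := (d <= cnt u (M u))%N.
Definition Inv w v := [/\ P w v, Top w & Top v].

Lemma top_pos u (k : 'I_N) : Top u -> (k < d)%N -> u (srt u k) = M u.
Proof.
move=> hT hk; apply/le_anti; rewrite M_ge /=.
have := ostat_cnt u k (M u); rewrite /ostat => ->; rewrite /Top in hT; lia.
Qed.

Lemma Inv_ext w v w' v' : w =1 w' -> v =1 v' -> Inv w v -> Inv w' v'.
Proof.
move=> hw hv [hP hTw hTv].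
have cw x : cnt w' x = cnt w x by rewrite (cnt_ext w w' x hw).
have cv x : cnt v' x = cnt v x by rewrite (cnt_ext v v' x hv).
have Mw := M_ext w w' hw; have Mv := M_ext v v' hv.
split; [move=> y; rewrite cw cv -Mw -Mv; exact: hP | by rewrite /Top cw -Mw | by rewrite /Top cv -Mv].
Qed.

Lemma M_drain w e : M (drain w e) = Num.max (M w - e) 0.
Proof.
apply: M_eq => [i|]; last by exists (srt w p0).
rewrite /drain ge_max !le_max lexx !orbT andbT; apply/orP; left.
have := M_ge w i; lra.
Qed.

Lemma Top_drain w e : Top w -> Top (drain w e).
Proof.
rewrite /Top M_drain => h; apply: leq_trans h _; apply: cnt_sub => i hi.
rewrite /drain; have -> : w i = M w by apply/le_anti; rewrite M_ge hi.
by [].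
Qed.

Lemma P_drain w v e : P w v -> P (drain w e) v.
Proof.
move=> h y; case: (ltrP y 0) => hy; first by rewrite cnt_neg.
apply: leq_trans (h y) _; apply: cnt_sub => i hi; rewrite M_drain /drain.
rewrite !maxEle; case: (lerP (M w - e) 0) => h1; case: (lerP (w i - e) 0) => h2; lra.
Qed.

Lemma sync_all v : synchronized v -> forall i, v i = M v.
Proof. by move=> /forallP h i; have /forallP /(_ (srt v p0)) /eqP := h i. Qed.

Lemma Inv_const w v cw cv : (forall i, w i = cw) -> (forall i, v i = cv) -> Inv w v.
Proof.
move=> hw hv.
have Mw : M w = cw by apply: M_eq => [i|]; [rewrite hw | exists p0].
have Mv : M v = cv by apply: M_eq => [i|]; [rewrite hv | exists p0].
split.
- move=> y; case: (ltrP y 0) => hy; first by rewrite cnt_neg.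
  rewrite (cnt_all w) ?cnt_max // => i; rewrite hw Mw; lra.
- by rewrite /Top (cnt_all w) // => i; rewrite hw Mw.
- by rewrite /Top (cnt_all v) // => i; rewrite hv Mv.
Qed.

Lemma Inv_drain w v e : Inv w v -> Inv (drain w e) (aux_drain v e).
Proof.
case=> hP hw hv; rewrite /aux_drain; case: ifP => hs.
- have hva := sync_all v hs.
  have hwa : forall i, w i = M w.
    have := hP 0; rewrite !subr0 (cnt_all v) => [/cnt_N h i|i]; last by rewrite hva.
    by apply/le_anti; rewrite M_ge h.
  apply: (@Inv_const _ _ (Num.max (M w - e) 0) (Num.max (M v - e) 0)) => i;
    by rewrite /drain ?hwa ?hva.
- by split; [exact: P_drain | exact: Top_drain | done].
Qed.

Definition F w (s : 'I_d -> 'I_N) (b : 'I_d -> R) := fmin (fun j : 'I_d => w (s j) + b j).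

Lemma arr_ge w s b i : w i <= arrive w s b i.
Proof. by rewrite /arrive; case: ifP => _ //; rewrite le_max lexx orbT. Qed.

Lemma arr_le w s b i : arrive w s b i <= Num.max (F w s b) (w i).
Proof. by rewrite /arrive; case: ifP => _; rewrite ?lexx // le_max lexx orbT. Qed.

Lemma arr_on w s b j : arrive w s b (s j) = Num.max (F w s b) (w (s j)).
Proof.
rewrite /arrive; have -> // : [exists j', s j' == s j].
by apply/existsP; exists j.
Qed.

Lemma arr_off w s b i : (forall j, s j != i) -> arrive w s b i = w i.
Proof. by rewrite /arrive => h; case: existsP => // [[j /eqP hj]]; have := h j; rewrite hj eqxx. Qed.

Lemma arr_cases w s b i : (exists j, s j = i) \/ (arrive w s b i = w i).
Proof.
case/boolP: [exists j, s j == i] => [/existsP [j /eqP hj]|/existsPn hn].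
  by left; exists j.
by right; apply: arr_off.
Qed.

Let j0 : 'I_d := Ordinal hd.

Lemma Top_arrive w s b : injective s -> Top w -> Top (arrive w s b).
Proof.
move=> hs hw; set w' := arrive w s b.
case: (lerP (M w) (F w s b)) => hF.
- have MF : M w' = F w s b.
    apply: M_eq => [i|].
      apply: le_trans (arr_le _ _ _ i) _; rewrite ge_max lexx /=.
      exact: le_trans (M_ge _ _) hF.
    exists (s j0); rewrite /w' arr_on max_l //; exact: le_trans (M_ge _ _) hF.
  rewrite /Top MF.
  have <- : #|[set s j | j in [set: 'I_d]]| = d by rewrite card_imset // cardsT card_ord.
  apply: subset_leq_card; apply/subsetP => y /imsetP [j _ ->].
  by rewrite inE /w' arr_on le_max lexx.
- have Mw' : M w' = M w.
    have le i : w' i <= M w.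
      apply: le_trans (arr_le _ _ _ i) _; rewrite ge_max M_ge andbT; exact: ltW.
    apply: M_eq => //; exists (srt w p0); apply/le_anti; rewrite le /=.
    exact: (arr_ge w s b (srt w p0)).
  rewrite /Top Mw'; apply: leq_trans hw _; apply: cnt_sub => i hi.
  exact: le_trans hi (arr_ge _ _ _ _).
Qed.

Lemma Fk w s b k : b k = 0 -> F w s b <= M w.
Proof.
move=> hk; rewrite /F; have := fmin_le (fun j => w (s j) + b j) k; rewrite hk addr0 => h; exact: le_trans h (M_ge _ _).
Qed.

Lemma zero_case w v v' s b : injective s -> (exists k, b k = 0) -> v' =1 v ->
  Inv w v -> Inv (arrive w s b) v'.
Proof.
move=> hs [k hk] hv' [hP hTw hTv].
have Mw' : M (arrive w s b) = M w.
  have le i : arrive w s b i <= M w.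
    apply: le_trans (arr_le _ _ _ i) _; rewrite ge_max M_ge andbT; exact: Fk hk.
  apply: M_eq => //; exists (srt w p0); apply/le_anti; rewrite le /=.
  exact: (arr_ge w s b (srt w p0)).
have cv x : cnt v' x = cnt v x by rewrite (cnt_ext v' v x hv').
split.
- move=> y; rewrite cv (M_ext v' v hv') Mw'; apply: leq_trans (hP y) _.
  apply: cnt_sub => i hi; exact: le_trans hi (arr_ge _ _ _ _).
- exact: Top_arrive.
- by rewrite /Top cv (M_ext v' v hv').
Qed.

Lemma typeA_case w v s b : injective s -> (forall j, 0 <= b j) -> typeA b -> Inv w v ->
  Inv (arrive w s b) (arrive v (fun j => srt v (widen_ord hdN j)) b).
Proof.
move=> hs hb _ [hP hTw hTv].
set sA := fun j => srt v (widen_ord hdN j).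
set m := fmin b.
have m0 : 0 <= m by apply: fmin_ge.
have [jm hjm] := fmin_ex b hd.
have hsA : injective sA.
  by move=> j1 j2 /perm_inj /(congr1 val) /= h; apply: val_inj.
have topv j : v (sA j) = M v by apply: top_pos => //=; exact: ltn_ord.
have FvE : F v sA b = M v + m.
  apply: fmin_char => [j|]; last by exists jm; rewrite topv -hjm.
  by rewrite topv lerD2l; exact: fmin_le.
set v' := arrive v sA b; set w' := arrive w s b.
have v'on j : v' (sA j) = M v + m.
  by rewrite /v' arr_on FvE topv max_l // lerDl.
have Mv' : M v' = M v + m.
  apply: M_eq => [i|]; last by exists (sA jm).
  case: (arr_cases v sA b i) => [[j <-]|hvi]; first by rewrite v'on.
  by rewrite /v' hvi; have := M_ge v i; lra.
have Mw' : M w' <= M w + m.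
  apply: M_le => i; apply: le_trans (arr_le _ _ _ i) _; rewrite ge_max; apply/andP; split.
    apply: le_trans (fmin_le _ jm) _; rewrite -hjm lerD2r; exact: M_ge.
  by have := M_ge w i; lra.
split.
- move=> y; case: (ltrP y m) => hym.
    case: (ltrP y 0) => hy0; first by rewrite cnt_neg.
    apply: (@leq_trans d).
      have <- : #|[set sA j | j in [set: 'I_d]]| = d by rewrite card_imset // cardsT card_ord.
      apply: subset_leq_card; apply/subsetP => i; rewrite inE Mv'.
      case: (arr_cases v sA b i) => [[j <-] _|]; first by apply: imset_f.
      by move=> hvi; rewrite /v' hvi => hi; have := M_ge v i; lra.
    have := Top_arrive w s b hs hTw; rewrite /Top => h; apply: (leq_trans h).
    by rewrite /w'; apply: cnt_sub => i hi; lra.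
  apply: (@leq_trans (cnt v (M v - (y - m)))).
    apply: cnt_sub => i; rewrite Mv'.
    case: (arr_cases v sA b i) => [[j <-] _|]; first by rewrite topv; lra.
    by move=> hvi; rewrite /v' hvi; lra.
  apply: leq_trans (hP (y - m)) _; apply: cnt_sub => i hi.
  by have := arr_ge w s b i; rewrite /w' in Mw' *; lra.
- exact: Top_arrive.
- exact: Top_arrive.
Qed.

Lemma B1_core w v w' v' p q beta :
  Inv w v -> (forall i, i != p -> w' i = w i) -> (forall i, i != q -> v' i = v i) ->
  (forall i, w p <= w i) -> (forall i, v q <= v i) ->
  w p <= w' p -> w' p <= M w -> (forall x, x <= M w -> x <= w p + beta -> x <= w' p) ->
  v q <= v' q -> v' q <= M v -> v' q <= v q + beta -> Inv w' v'.
Proof.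
case=> hP hTw hTv hw hv minw minv hwp1 hwp2 hwp3 hvq1 hvq2 hvq3.
have gew i : w i <= w' i by case: (eqVneq i p) => [->|/hw ->].
have gev i : v i <= v' i by case: (eqVneq i q) => [->|/hv ->].
have lew i : w' i <= M w by case: (eqVneq i p) => [->|/hw ->] //; exact: M_ge.
have lev i : v' i <= M v by case: (eqVneq i q) => [->|/hv ->] //; exact: M_ge.
have Mw' : M w' = M w.
  apply: M_eq => //; exists (srt w p0); apply/le_anti; rewrite lew /=.
  exact: (gew (srt w p0)).
have Mv' : M v' = M v.
  apply: M_eq => //; exists (srt v p0); apply/le_anti; rewrite lev /=.
  exact: (gev (srt v p0)).
split.
- move=> y; rewrite Mw' Mv'; set x := M v - y; set xw := M w - y.
  have Ev := cnt_upd v v' q x hv.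
  have Ew := cnt_upd w w' p xw hw.
  have hPy := hP y; rewrite -/x -/xw in hPy.
  have cwle : (cnt w xw <= cnt w' xw)%N by apply: cnt_sub => i hi; exact: le_trans hi (gew i).
  have cvN := cnt_max v' x.
  case: (boolP (x <= v q)) => h1.
    have e : cnt v x = N by apply: cnt_all => i; exact: le_trans h1 (minv i).
    by rewrite e in hPy; exact: leq_trans cvN (leq_trans hPy cwle).
  rewrite (negbTE h1) /= in Ev.
  case: (boolP (x <= v' q)) => h2; last first.
    rewrite (negbTE h2) /= in Ev; clear -Ev hPy cwle; lia.
  rewrite h2 /= in Ev.
  have lowp : M w - (M v - v q) <= w p.
    apply: (@cnt_N w) => //; apply: leq_trans (hP (M v - v q)).
    by rewrite (cnt_all v) // => i; have := minv i; lra.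
  have h3 : xw <= w' p.
    apply: hwp3; rewrite /xw.
      by rewrite /x in h2; have := lev q; lra.
    by rewrite /x in h2; lra.
  rewrite h3 /= in Ew.
  case: (boolP (xw <= w p)) => h4.
    have : cnt w' xw = N by apply: cnt_all => i; apply: le_trans h4 (le_trans (minw i) (gew i)).
    by move=> ->.
  rewrite (negbTE h4) /= in Ew; clear -Ev Ew hPy; lia.
- rewrite /Top Mw'; apply: leq_trans hTw _; apply: cnt_sub => i hi; exact: le_trans hi (gew i).
- rewrite /Top Mv'; apply: leq_trans hTv _; apply: cnt_sub => i hi; exact: le_trans hi (gev i).
Qed.

Lemma B1_case w v s b : (forall j, 0 <= b j) -> (exists k, b k = 0) -> typeB1 srt w s b ->
  Inv w v -> Inv (arrive w s b) (arrive v (fun j => srt v ((srt w)^-1%g (s j))) b).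
Proof.
move=> hb [k hk] /andP [_ /existsP [l /and3P [hbl /eqP hrl /forallP hall]]] hI.
have hI' := hI; case: hI' => hP hTw hTv.
have hkl : k != l by apply: contraNneq hbl => <-; rewrite hk.
set s' := fun j => srt v ((srt w)^-1%g (s j)).
have rk j : j != l -> ((srt w)^-1%g (s j) < d)%N.
  move=> hj; have := implyP (hall j) hj; rewrite /rank => h.
  by apply: leq_trans h _; rewrite leq_pred.
have topw j : j != l -> w (s j) = M w.
  by move=> hj; rewrite -(permKV (srt w) (s j)); apply: top_pos => //; exact: rk.
have topv j : j != l -> v (s' j) = M v.
  by move=> hj; apply: top_pos => //; exact: rk.
rewrite /rank in hrl.
have minw i : w (s l) <= w i.
  rewrite -(permKV (srt w) i) -(permKV (srt w) (s l)); apply: hsrt; rewrite hrl.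
  by move: (ltn_ord ((srt w)^-1%g i)); lia.
have minv i : v (s' l) <= v i.
  rewrite -(permKV (srt v) i) /s'; apply: hsrt; rewrite hrl.
  by move: (ltn_ord ((srt v)^-1%g i)); lia.
have Fw1 : F w s b <= M w by apply: le_trans (fmin_le _ k) _; rewrite hk addr0 topw.
have Fw2 x : x <= M w -> x <= w (s l) + b l -> x <= F w s b.
  move=> h1 h2; apply: fmin_ge => // j; case: (eqVneq j l) => [->|hj] //=.
  by rewrite topw //; have := hb j; lra.
have Fv1 : F v s' b <= M v by apply: le_trans (fmin_le _ k) _; rewrite hk addr0 topv.
have Fv2 : F v s' b <= v (s' l) + b l by exact: fmin_le.
apply: (@B1_core w v _ _ (s l) (s' l) (b l)) => //.
- move=> i hi; case: (arr_cases w s b i) => [[j hj]|->] //; subst i.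
  have hj : j != l by apply: contraNneq hi => ->.
  by rewrite arr_on topw // max_r.
- move=> i hi; case: (arr_cases v s' b i) => [[j hj]|->] //; subst i.
  have hj : j != l by apply: contraNneq hi => ->.
  by rewrite arr_on topv // max_r.
- exact: arr_ge.
- by rewrite arr_on ge_max Fw1 M_ge.
- by move=> x h1 h2; rewrite arr_on le_max Fw2.
- exact: arr_ge.
- by rewrite arr_on ge_max Fv1 M_ge.
- by rewrite arr_on ge_max Fv2 /= lerDl hb.
Qed.

Lemma Inv_arrive w v s b : injective s -> (forall j, 0 <= b j) -> Inv w v ->
  Inv (arrive w s b) (aux_arrive srt hdN w v s b).
Proof.
move=> hs hb hI; rewrite /aux_arrive; case: ifP => hA; first exact: typeA_case.
have hk : exists k, b k = 0.
  by move/negbT: hA; rewrite /typeA => /forallPn [k /negPn /eqP hk]; exists k.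
case: ifP => hC.
  apply: (@zero_case w v _ s b hs hk _ hI) => i; case: (arr_cases v s b i) => [[j <-]|->] //.
  rewrite arr_on max_r //; apply: le_trans (fmin_le _ j) _.
  by move/forallP: hC => /(_ j) /eqP ->; rewrite addr0.
case: ifP => hB1; first exact: B1_case.
exact: (@zero_case w v v s b hs hk (fun i => erefl) hI).
Qed.

End Main.

Theorem lemma2 (R : realType) (N d : nat) (hd : (0 < d)%N) (hdN : (d <= N)%N)
  (srt : ('I_N -> R) -> {perm 'I_N})
  (hsrt : forall (w : 'I_N -> R) (i j : 'I_N), (i <= j)%N -> w (srt w j) <= w (srt w i))
  (K : R) (hK : 1 <= K)
  (X : nat -> 'I_d -> R) (hX : forall n j, 0 < X n j)
  (z : nat -> 'I_d -> bool)
  (a : nat -> R) (ha0 : 0 < a 0%N) (ha : forall n, a n < a n.+1)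
  (srv : nat -> 'I_d -> 'I_N) (hsrv : forall n, injective (srv n))
  (w0 : 'I_N -> R) (hw0 : forall i, 0 <= w0 i)
  (hsync : forall k : 'I_N, (k < d)%N -> ostat srt w0 k = ostat srt w0 (pos0 hd hdN)) :
  forall (n : nat) (t : R), prev_arr a n <= t -> t < a n ->
  forall i : 'I_N,
    ostat srt (orig_at srt hdN a srv (req K X z) w0 n t) (pos0 hd hdN)
      - ostat srt (orig_at srt hdN a srv (req K X z) w0 n t) i
    <= ostat srt (aux_at srt hdN a srv (req K X z) w0 n t) (pos0 hd hdN)
      - ostat srt (aux_at srt hdN a srv (req K X z) w0 n t) i.
Proof.
have hb : forall n j, 0 <= req K X z n j.
  move=> n j; rewrite /req; case: ifP => _ //.
  by apply: mulr_ge0; [exact: ltW | have := hK; lra].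
have hI : forall n, Inv R N d hd hdN srt (states srt hdN a srv (req K X z) w0 n).1
                                     (states srt hdN a srv (req K X z) w0 n).2.
  elim => [|n IH] /=.
    have hT : Top R N d hd hdN srt w0.
      have hk : (d.-1 < N)%N by rewrite prednK.
      have := ostat_cnt R N srt hsrt w0 (Ordinal hk) (M R N d hd hdN srt w0).
      rewrite hsync /=; last by rewrite prednK.
      by rewrite /M lexx prednK // => /esym.
    by split => // y.
  move: IH; case: (states srt hdN a srv (req K X z) w0 n) => w v /= IH.
  apply: (Inv_arrive R N d hd hdN srt hsrt); [exact: hsrv | exact: hb | exact: Inv_drain].
move=> n t _ _ i.
have [hP _ _] := Inv_drain R N d hd hdN srt hsrt _ _ (t - prev_arr a n) (hI n).
rewrite /orig_at /aux_at.
set W := drain _ _ in hP *; set V := aux_drain _ _ in hP *.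
have h1 : (i < cnt R N V (M R N d hd hdN srt V - (M R N d hd hdN srt V - ostat srt V i)))%N.
  by rewrite (_ : _ - (_ - _) = ostat srt V i) ?subKr // -(ostat_cnt R N srt hsrt).
have h2 := leq_trans h1 (hP _).
rewrite -(ostat_cnt R N srt hsrt) /M in h2.
rewrite /M in h2; lra.
Qed.
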